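(* Let ${\tt E}$ be ${\tt CS}$ or ${\tt o}$. For all $\lambda j$-terms $t_0,t_1,u_0,u_1$: if $t_0\equiv_{\tt E}t_1$, $t_0\to^*_{\lambda j/{\tt E}}u_0$ and $t_1\to^*_{\lambda j/{\tt E}}u_1$, then there exist $v_0,v_1$ with $u_0\to^*_{\lambda j/{\tt E}}v_0$, $u_1\to^*_{\lambda j/{\tt E}}v_1$ and $v_0\equiv_{\tt E}v_1$.
   Context: $\lambda j$-terms are generated by $t,u::= x\mid \lambda x.t\mid t\,u\mid t[x/u]$; $\lambda x.t$ and $t[x/u]$ bind $x$ in $t$ (not in $u$), and terms are considered modulo $\alpha$-conversion. $\mathrm{fv}(t)$ is the set of free variables, $t\{x/u\}$ is capture-avoiding meta-level substitution, and $|t|_x$ is the number of free occurrences of $x$ in $t$. If $|t|_x=n\ge2$, $t_{[y]_x}$ denotes any term obtained from $t$ by replacing $k$ of the free occurrences of $x$ by a fresh variable $y$, for some $1\le k\le n-1$. ${\tt L}$ denotes a (possibly empty) list of jumps $[x_1/u_1]\dots[x_k/u_k]$. The rewriting rules, closed under all contexts, are: $({\tt dB})$ $(\lambda x.t){\tt L}\,u\to t[x/u]{\tt L}$ where no $x_i$ of ${\tt L}$ is free in $u$; $({\tt w})$ $t[x/u]\to t$ if $|t|_x=0$; $({\tt d})$ $t[x/u]\to t\{x/u\}$ if $|t|_x=1$; $({\tt c})$ $t[x/u]\to t_{[y]_x}[x/u][y/u]$ if $|t|_x\ge2$, $y$ fresh. $\to_{\lambda j}$ is the union of all four. $\equiv_{\tt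 CS}$ is the smallest equivalence closed under contexts containing $t[x/s][y/v]\sim t[y/v][x/s]$ whenever $x\notin\mathrm{fv}(v)$ and $y\notin\mathrm{fv}(s)$. $\equiv_{\tt o}$ is the smallest equivalence closed under contexts containing that equation together with $\lambda y.(t[x/s])\sim(\lambda y.t)[x/s]$ if $y\notin\mathrm{fv}(s)$, and $t[x/s]\,v\sim(t\,v)[x/s]$ if $x\notin\mathrm{fv}(v)$. For an equivalence ${\tt E}$, $t\to_{\lambda j/{\tt E}}u$ iff $t\equiv_{\tt E}t'\to_{\lambda j}u'\equiv_{\tt E}u$ for some $t',u'$. *)

(* Defs.v *)
(* lambda-j terms in de Bruijn representation (alpha-conversion
   is thus built in). Index 0 refers to the innermost binder; both
   [Lam t] and [Sub t u] (= t[x/u]) bind index 0 in t but not in u. *)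
From Stdlib Require Import Arith List Relations.

Inductive term : Type :=
| Var (n : nat)
| Lam (t : term)
| App (t u : term)
| Sub (t u : term).

Fixpoint lift (k c : nat) (t : term) : term :=
  match t with
  | Var n => if n <? c then Var n else Var (n + k)
  | Lam a => Lam (lift k (S c) a)
  | App a b => App (lift k c a) (lift k c b)
  | Sub a b => Sub (lift k (S c) a) (lift k c b)
  end.

(* subst d t u : capture-avoiding meta-level substitution t{d/u}, removing the
   binder of index d (indices above d are decremented) *)
Fixpoint subst (d : nat) (t u : term) : term :=
  match t with
  | Var n => if n <? d then Var n
             else if n =? d then lift d 0 u else Var (pred n)
  | Lam a => Lam (subst (S d) a u)
  | App a b => App (subst d a u) (subst d b u)
  | Sub a b => Sub (subst (S d) a u) (subst d b u)
  end.

Fixpoint occ (d : nat) (t : term) : nat :=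
  match t with
  | Var n => if n =? d then 1 else 0
  | Lam a => occ (S d) a
  | App a b => occ d a + occ d b
  | Sub a b => occ (S d) a + occ d b
  end.

Fixpoint swap (d : nat) (t : term) : term :=
  match t with
  | Var n => if n =? d then Var (S d) else if n =? S d then Var d else Var n
  | Lam a => Lam (swap (S d) a)
  | App a b => App (swap d a) (swap d b)
  | Sub a b => Sub (swap (S d) a) (swap d b)
  end.

(* t L, with L = [x1/u1]...[xk/uk] given as the list [u1;...;uk] *)
Definition appL (t : term) (L : list term) : term :=
  fold_left (fun acc u => Sub acc u) L t.

(* ren_some d t t' : t' is obtained from t by replacing some (possibly zero)
   free occurrences of x (index d in t and t') by a fresh variable y
   (index d+1 in t'); other free indices above d are shifted up by one. *)
Inductive ren_some : nat -> term -> term -> Prop :=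
| rs_bound d n : n < d -> ren_some d (Var n) (Var n)
| rs_free d n : d < n -> ren_some d (Var n) (Var (S n))
| rs_keep d : ren_some d (Var d) (Var d)
| rs_rename d : ren_some d (Var d) (Var (S d))
| rs_lam d a a' : ren_some (S d) a a' -> ren_some d (Lam a) (Lam a')
| rs_app d a a' b b' : ren_some d a a' -> ren_some d b b' ->
    ren_some d (App a b) (App a' b')
| rs_sub d a a' b b' : ren_some (S d) a a' -> ren_some d b b' ->
    ren_some d (Sub a b) (Sub a' b').

Inductive root_step : term -> term -> Prop :=
| r_dB (t : term) (L : list term) (u : term) :
    root_step (App (appL (Lam t) L) u) (appL (Sub t (lift (length L) 0 u)) L)
| r_w (t u : term) : occ 0 t = 0 -> root_step (Sub t u) (subst 0 t u)
| r_d (t u : term) : occ 0 t = 1 -> root_step (Sub t u) (subst 0 t u)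
| r_c (t t' u : term) : 2 <= occ 0 t -> ren_some 0 t t' ->
    1 <= occ 0 t' -> 1 <= occ 1 t' ->
    root_step (Sub t u) (Sub (Sub t' (lift 1 0 u)) u).

Inductive ctx (R : relation term) : relation term :=
| c_root t u : R t u -> ctx R t u
| c_lam t t' : ctx R t t' -> ctx R (Lam t) (Lam t')
| c_appl t t' u : ctx R t t' -> ctx R (App t u) (App t' u)
| c_appr t u u' : ctx R u u' -> ctx R (App t u) (App t u')
| c_subl t t' u : ctx R t t' -> ctx R (Sub t u) (Sub t' u)
| c_subr t u u' : ctx R u u' -> ctx R (Sub t u) (Sub t u').

Definition lj_step : relation term := ctx root_step.

Inductive eqkind : Type := CS | O.

(* the equations; side conditions x∉fv(v), y∉fv(s) are expressed by lifting *)
Inductive eq_ax : eqkind -> relation term :=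
| ax_cs (E : eqkind) (t s v : term) :
    eq_ax E (Sub (Sub t (lift 1 0 s)) v) (Sub (Sub (swap 0 t) (lift 1 0 v)) s)
| ax_lam (t s : term) :
    eq_ax O (Lam (Sub t (lift 1 0 s))) (Sub (Lam (swap 0 t)) s)
| ax_app (t s v : term) :
    eq_ax O (App (Sub t s) v) (Sub (App t (lift 1 0 v)) s).

Definition equivE (E : eqkind) : relation term :=
  clos_refl_sym_trans term (ctx (eq_ax E)).

Definition stepE (E : eqkind) (t u : term) : Prop :=
  exists t' u', equivE E t t' /\ lj_step t' u' /\ equivE E u' u.

Definition stepsE (E : eqkind) : relation term := clos_refl_trans term (stepE E).

(* Main.v *)
Require Import Defs.
From Stdlib Require Import Arith List Relations Lia FunctionalExtensionality.

Definition upr (xi : nat -> nat) (n : nat) : nat :=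
  match n with 0 => 0 | S m => S (xi m) end.
Fixpoint ren (xi : nat -> nat) (t : term) : term :=
  match t with
  | Var n => Var (xi n)
  | Lam a => Lam (ren (upr xi) a)
  | App a b => App (ren xi a) (ren xi b)
  | Sub a b => Sub (ren (upr xi) a) (ren xi b)
  end.
Definition ups (s : nat -> term) (n : nat) : term :=
  match n with 0 => Var 0 | S m => ren S (s m) end.
Fixpoint sb (s : nat -> term) (t : term) : term :=
  match t with
  | Var n => s n
  | Lam a => Lam (sb (ups s) a)
  | App a b => App (sb s a) (sb s b)
  | Sub a b => Sub (sb (ups s) a) (sb s b)
  end.
Definition scons (u : term) (s : nat -> term) (n : nat) : term :=
  match n with 0 => u | S m => s m end.

Lemma ren_ren : forall t xi zeta, ren xi (ren zeta t) = ren (fun n => xi (zeta n)) t.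
Proof.
  induction t; intros; simpl; try rewrite IHt; try rewrite IHt1; try rewrite IHt2;
  try reflexivity; f_equal; f_equal; extensionality n; destruct n; reflexivity.
Qed.

Lemma sb_ren : forall t s xi, sb s (ren xi t) = sb (fun n => s (xi n)) t.
Proof.
  induction t; intros; simpl; try rewrite IHt; try rewrite IHt1; try rewrite IHt2;
  try reflexivity; f_equal; f_equal; extensionality n; destruct n; reflexivity.
Qed.

Lemma ren_sb : forall t s xi, ren xi (sb s t) = sb (fun n => ren xi (s n)) t.
Proof.
  induction t; intros; simpl; try rewrite IHt; try rewrite IHt1; try rewrite IHt2;
  try reflexivity; f_equal; f_equal; extensionality n; destruct n; simpl; try reflexivity;
  rewrite !ren_ren; reflexivity.
Qed.

Lemma sb_sb : forall t s r, sb s (sb r t) = sb (fun n => sb s (r n)) t.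
Proof.
  induction t; intros; simpl; try rewrite IHt; try rewrite IHt1; try rewrite IHt2;
  try reflexivity; f_equal; f_equal; extensionality n; destruct n; simpl; try reflexivity;
  rewrite sb_ren, ren_sb; reflexivity.
Qed.

Lemma sb_var : forall t, sb Var t = t.
Proof.
  assert (H : ups Var = Var) by (extensionality n; destruct n; reflexivity).
  induction t; simpl; rewrite ?H; congruence.
Qed.

Lemma ren_as_sb : forall t xi, ren xi t = sb (fun n => Var (xi n)) t.
Proof.
  induction t; intros; simpl; try rewrite IHt; try rewrite IHt1; try rewrite IHt2;
  try reflexivity; f_equal; f_equal; extensionality n; destruct n; reflexivity.
Qed.

Ltac nat_cases := repeat match goal with
  | |- context [?a <? ?b] => destruct (Nat.ltb_spec a b)
  | |- context [?a =? ?b] => destruct (Nat.eqb_spec a b)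
  | |- context [?a <=? ?b] => destruct (Nat.leb_spec a b)
  end.

Definition lf k c n := if n <? c then n else n + k.
Lemma lift_ren : forall t k c, lift k c t = ren (lf k c) t.
Proof.
  induction t; intros; simpl; try rewrite IHt; try rewrite IHt1; try rewrite IHt2.
  - unfold lf; destruct (n <? c); reflexivity.
  - f_equal; f_equal; extensionality n; destruct n; unfold lf; simpl; try reflexivity.
    nat_cases; f_equal; lia.
  - reflexivity.
  - f_equal; f_equal; extensionality n; destruct n; unfold lf; simpl; try reflexivity.
    nat_cases; f_equal; lia.
Qed.

Definition sf d u n := if n <? d then Var n else if n =? d then lift d 0 u else Var (pred n).
Lemma ups_sf : forall d u, ups (sf d u) = sf (S d) u.
Proof.
  intros; extensionality n; destruct n; [reflexivity|].
  unfold ups, sf. simpl. nat_cases; simpl; try reflexivity; try lia.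
  - subst. rewrite !lift_ren, ren_ren. f_equal. extensionality x. unfold lf. simpl. lia.
  - destruct n; [lia|reflexivity].
Qed.
Lemma subst_sb : forall t d u, subst d t u = sb (sf d u) t.
Proof.
  induction t; intros; simpl; try rewrite IHt; try rewrite IHt1; try rewrite IHt2;
  try rewrite ups_sf; reflexivity.
Qed.
Lemma sf0 : forall u, sf 0 u = scons u Var.
Proof.
  intros; extensionality n; destruct n; unfold sf; simpl; try reflexivity.
  rewrite lift_ren, ren_as_sb. unfold lf. simpl. rewrite <- (sb_var u) at 2.
  f_equal. extensionality x. f_equal. lia.
Qed.
Lemma subst0 : forall t u, subst 0 t u = sb (scons u Var) t.
Proof. intros; rewrite subst_sb, sf0; reflexivity. Qed.

Definition swf d n := if n =? d then S d else if n =? S d then d else n.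
Lemma swap_ren : forall t d, swap d t = ren (swf d) t.
Proof.
  assert (H : forall d, upr (swf d) = swf (S d)).
  { intros; extensionality n; destruct n; unfold swf; simpl; try reflexivity.
    nat_cases; simpl; reflexivity. }
  induction t; intros; simpl; try rewrite IHt; try rewrite IHt1; try rewrite IHt2;
  rewrite ?H; try reflexivity.
  unfold swf; nat_cases; reflexivity.
Qed.

Fixpoint unf (t : term) : term :=
  match t with
  | Var n => Var n
  | Lam a => Lam (unf a)
  | App a b => App (unf a) (unf b)
  | Sub a b => sb (scons (unf b) Var) (unf a)
  end.

Lemma unf_ren : forall t xi, unf (ren xi t) = ren xi (unf t).
Proof.
  induction t; intros; simpl; try rewrite IHt; try rewrite IHt1; try rewrite IHt2; try reflexivity.
  rewrite sb_ren, ren_sb. f_equal. extensionality n; destruct n; reflexivity.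
Qed.

Lemma unf_sb : forall t s, unf (sb s t) = sb (fun n => unf (s n)) (unf t).
Proof.
  induction t; intros; simpl; try rewrite IHt; try rewrite IHt1; try rewrite IHt2; try reflexivity.
  - f_equal. f_equal. extensionality n; destruct n; simpl; try reflexivity. apply unf_ren.
  - rewrite !sb_sb. f_equal. extensionality n; destruct n; simpl; try reflexivity.
    rewrite unf_ren, sb_ren. simpl. rewrite sb_var. reflexivity.
Qed.

Definition mf d n := if n <=? d then n else pred n.
Lemma ren_some_merge : forall d t t', ren_some d t t' -> t = ren (mf d) t'.
Proof.
  assert (H : forall d, upr (mf d) = mf (S d)).
  { intros; extensionality n; destruct n; unfold mf; simpl; try reflexivity.
    nat_cases; try lia; try reflexivity. }
  induction 1; simpl; rewrite ?H; try congruence; unfold mf; nat_cases; try lia; reflexivity.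
Qed.

Lemma ren_none : forall t d, exists t', ren_some d t t' /\ occ d t' = occ d t /\ occ (S d) t' = 0.
Proof.
  induction t; intros; simpl.
  - destruct (lt_eq_lt_dec n d) as [[H|H]|H].
    + exists (Var n); split; [apply rs_bound; auto | cbn [occ]; split; nat_cases; lia].
    + subst. exists (Var d); split; [apply rs_keep | cbn [occ]; split; nat_cases; lia].
    + exists (Var (S n)); split; [apply rs_free; auto | cbn [occ]; split; nat_cases; lia].
  - destruct (IHt (S d)) as (t' & ? & ? & ?). exists (Lam t'); simpl; split; [constructor; auto | split; lia].
  - destruct (IHt1 d) as (a & ? & ? & ?). destruct (IHt2 d) as (b & ? & ? & ?).
    exists (App a b); simpl; split; [constructor; auto | split; lia].
  - destruct (IHt1 (S d)) as (a & ? & ? & ?). destruct (IHt2 d) as (b & ? & ? & ?).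
    exists (Sub a b); simpl; split; [constructor; auto | split; lia].
Qed.

Lemma ren_one : forall t d, 1 <= occ d t -> exists t', ren_some d t t' /\ occ d t' = occ d t - 1 /\ occ (S d) t' = 1.
Proof.
  induction t; intros d Ho; simpl in *.
  - destruct (Nat.eqb_spec n d); [|lia]. subst.
    exists (Var (S d)); split; [apply rs_rename | cbn [occ]; split; nat_cases; lia].
  - destruct (IHt (S d) Ho) as (t' & ? & ? & ?). exists (Lam t'); simpl; split; [constructor; auto | split; lia].
  - destruct (Nat.le_gt_cases 1 (occ d t1)).
    + destruct (IHt1 d H) as (a & ? & ? & ?). destruct (ren_none t2 d) as (b & ? & ? & ?).
      exists (App a b); simpl; split; [constructor; auto | split; lia].
    + destruct (IHt2 d ltac:(lia)) as (b & ? & ? & ?). destruct (ren_none t1 d) as (a & ? & ? & ?).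
      exists (App a b); simpl; split; [constructor; auto | split; lia].
  - destruct (Nat.le_gt_cases 1 (occ (S d) t1)).
    + destruct (IHt1 (S d) H) as (a & ? & ? & ?). destruct (ren_none t2 d) as (b & ? & ? & ?).
      exists (Sub a b); simpl; split; [constructor; auto | split; lia].
    + destruct (IHt2 d ltac:(lia)) as (b & ? & ? & ?). destruct (ren_none t1 (S d)) as (a & ? & ? & ?).
      exists (Sub a b); simpl; split; [constructor; auto | split; lia].
Qed.

Lemma occ_lift : forall u k c d, c <= d < c + k -> occ d (lift k c u) = 0.
Proof.
  induction u; intros; simpl.
  - nat_cases; simpl; nat_cases; lia.
  - apply IHu; lia.
  - rewrite IHu1, IHu2; lia.
  - rewrite IHu1, IHu2; lia.
Qed.

Lemma lift_lift0 : forall u d, lift d 0 (lift 1 0 u) = lift (S d) 0 u.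
Proof.
  intros. rewrite !lift_ren, ren_ren. f_equal. extensionality x. unfold lf. simpl. lia.
Qed.

Lemma occ_subst_lift : forall t d u, occ d (subst d t (lift 1 0 u)) = occ (S d) t.
Proof.
  induction t; intros; cbn [subst occ]; try rewrite IHt; try rewrite IHt1; try rewrite IHt2; try reflexivity.
  nat_cases; cbn [occ]; nat_cases; try lia.
  subst. rewrite lift_lift0, occ_lift; lia.
Qed.

Lemma sb_id_ext : forall s t, (forall n, s n = Var n) -> sb s t = t.
Proof.
  intros. replace s with Var by (extensionality n; auto). apply sb_var.
Qed.

Definition ljs := clos_refl_trans term lj_step.

Lemma ljs_ctx : forall (f : term -> term), (forall a b, lj_step a b -> lj_step (f a) (f b)) ->
  forall a b, ljs a b -> ljs (f a) (f b).
Proof.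
  intros f Hf a b H; induction H.
  - apply rt_step; auto.
  - apply rt_refl.
  - eapply rt_trans; eauto.
Qed.

Lemma ljs_lam : forall a b, ljs a b -> ljs (Lam a) (Lam b).
Proof. apply ljs_ctx; intros; apply c_lam; auto. Qed.
Lemma ljs_appl : forall a b c, ljs a b -> ljs (App a c) (App b c).
Proof. intros c0 d c; apply (ljs_ctx (fun x => App x c)); intros; apply c_appl; auto. Qed.
Lemma ljs_appr : forall a b c, ljs a b -> ljs (App c a) (App c b).
Proof. intros c0 d c; apply (ljs_ctx (fun x => App c x)); intros; apply c_appr; auto. Qed.
Lemma ljs_subl : forall a b c, ljs a b -> ljs (Sub a c) (Sub b c).
Proof. intros c0 d c; apply (ljs_ctx (fun x => Sub x c)); intros; apply c_subl; auto. Qed.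
Lemma ljs_subr : forall a b c, ljs a b -> ljs (Sub c a) (Sub c b).
Proof. intros c0 d c; apply (ljs_ctx (fun x => Sub c x)); intros; apply c_subr; auto. Qed.

Lemma merge_eq : forall t t' u, ren_some 0 t t' ->
  subst 0 (subst 0 t' (lift 1 0 u)) u = subst 0 t u.
Proof.
  intros t t' u H. apply ren_some_merge in H. subst t.
  rewrite !subst0, lift_ren, sb_sb, sb_ren. f_equal. extensionality n.
  destruct n as [|[|n]]; simpl; try reflexivity.
  rewrite sb_ren. apply sb_id_ext. intros x. unfold lf. simpl. rewrite Nat.add_1_r. reflexivity.
Qed.

Lemma sub_to_subst_n : forall n t u, occ 0 t = n -> ljs (Sub t u) (subst 0 t u).
Proof.
  intro n; induction n as [n IH] using lt_wf_ind; intros t u Hn.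
  destruct (Nat.lt_ge_cases n 2) as [Hl|Hl].
  - apply rt_step, c_root. destruct n as [|[|]]; [apply r_w|apply r_d|lia]; auto.
  - destruct (ren_one t 0 ltac:(lia)) as (t' & Hr & H0 & H1).
    eapply rt_trans.
    { apply rt_step, c_root. apply (r_c t t' u); auto; lia. }
    eapply rt_trans.
    { apply ljs_subl. apply (IH (n - 1)); [lia|]. lia. }
    apply rt_step, c_root. rewrite <- (merge_eq t t' u Hr).
    apply r_d. rewrite occ_subst_lift. auto.
Qed.

Lemma sub_to_subst : forall t u, ljs (Sub t u) (subst 0 t u).
Proof. intros; eapply sub_to_subst_n; eauto. Qed.

Lemma ljs_unf : forall t, ljs t (unf t).
Proof.
  induction t; simpl.
  - apply rt_refl.
  - apply ljs_lam; auto.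
  - eapply rt_trans; [apply ljs_appl; eauto| apply ljs_appr; eauto].
  - eapply rt_trans; [apply ljs_subl; eauto|]. eapply rt_trans; [apply ljs_subr; eauto|].
    rewrite <- subst0. apply sub_to_subst.
Qed.

Inductive broot : term -> term -> Prop :=
| br a b : broot (App (Lam a) b) (sb (scons b Var) a).
Definition beta := ctx broot.
Definition betas := clos_refl_trans term beta.

Lemma lift00 : forall t, lift 0 0 t = t.
Proof. intros; rewrite lift_ren, ren_as_sb. apply sb_id_ext. intros; unfold lf; simpl. f_equal; lia. Qed.

Lemma beta_ljs : forall a b, beta a b -> ljs a b.
Proof.
  induction 1.
  - destruct H. eapply rt_trans.
    + apply rt_step, c_root. apply (r_dB a nil b).
    + simpl. rewrite lift00, <- subst0. apply sub_to_subst.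
  - apply ljs_lam; auto.
  - apply ljs_appl; auto.
  - apply ljs_appr; auto.
  - apply ljs_subl; auto.
  - apply ljs_subr; auto.
Qed.

Lemma betas_ljs : forall a b, betas a b -> ljs a b.
Proof. induction 1; [apply beta_ljs; auto|apply rt_refl|eapply rt_trans; eauto]. Qed.

Lemma E_sb : forall a b s, sb s (sb (scons b Var) a) = sb (scons (sb s b) Var) (sb (ups s) a).
Proof.
  intros; rewrite !sb_sb. f_equal. extensionality n. destruct n; simpl; try reflexivity.
  rewrite sb_ren. simpl. rewrite sb_var. reflexivity.
Qed.
Lemma E_ren : forall a b xi, ren xi (sb (scons b Var) a) = sb (scons (ren xi b) Var) (ren (upr xi) a).
Proof.
  intros; rewrite ren_sb, sb_ren. f_equal. extensionality n. destruct n; simpl; reflexivity.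
Qed.

Inductive par : term -> term -> Prop :=
| p_var n : par (Var n) (Var n)
| p_lam a a' : par a a' -> par (Lam a) (Lam a')
| p_app a a' b b' : par a a' -> par b b' -> par (App a b) (App a' b')
| p_sub a a' b b' : par a a' -> par b b' -> par (Sub a b) (Sub a' b')
| p_beta a a' b b' : par a a' -> par b b' -> par (App (Lam a) b) (sb (scons b' Var) a').

Lemma par_refl : forall t, par t t.
Proof. induction t; constructor; auto. Qed.

Lemma par_ren : forall a b, par a b -> forall xi, par (ren xi a) (ren xi b).
Proof.
  induction 1; intros; simpl; try (constructor; auto).
  rewrite E_ren. apply p_beta; auto.
Qed.

Lemma par_sb : forall a b, par a b -> forall s r, (forall n, par (s n) (r n)) -> par (sb s a) (sb r b).
Proof.
  assert (Hup : forall s r, (forall n, par (s n) (r n)) -> forall n, par (ups s n) (ups r n)).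
  { intros s r H n; destruct n; simpl; [constructor|apply par_ren; auto]. }
  induction 1; intros; simpl; auto; try (constructor; auto; fail).
  rewrite E_sb. apply p_beta; auto.
Qed.

Fixpoint cd (t : term) : term :=
  match t with
  | Var n => Var n
  | Lam a => Lam (cd a)
  | App a b => match a with
               | Lam a0 => sb (scons (cd b) Var) (cd a0)
               | _ => App (cd a) (cd b)
               end
  | Sub a b => Sub (cd a) (cd b)
  end.

Lemma par_scons : forall a b, par a b -> forall n, par (scons a Var n) (scons b Var n).
Proof. intros; destruct n; simpl; auto; constructor. Qed.

Lemma triangle : forall a b, par a b -> par b (cd a).
Proof.
  induction 1; simpl; try (constructor; auto; fail).
  - destruct a; try (constructor; auto; fail).
    inversion H; subst. inversion IHpar1; subst.
    apply p_beta; auto.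
  - apply par_sb; auto. apply par_scons; auto.
Qed.

Definition pars := clos_refl_trans term par.

Lemma strip : forall a b c, par a b -> pars a c -> exists d, pars b d /\ par c d.
Proof.
  intros a b c Hab Hac. revert b Hab. induction Hac; intros.
  - exists (cd x). split; [apply rt_step; apply triangle; auto| apply triangle; auto].
  - exists b; split; [apply rt_refl|auto].
  - destruct (IHHac1 b Hab) as (d1 & ? & ?). destruct (IHHac2 d1 H0) as (d2 & ? & ?).
    exists d2; split; auto. eapply rt_trans; eauto.
Qed.

Lemma pars_confl : forall a b c, pars a b -> pars a c -> exists d, pars b d /\ pars c d.
Proof.
  intros a b c Hab. revert c. induction Hab; intros.
  - destruct (strip _ _ _ H H0) as (d & ? & ?). exists d; split; auto. apply rt_step; auto.
  - exists c; split; auto. apply rt_refl.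
  - destruct (IHHab1 c H) as (d1 & ? & ?). destruct (IHHab2 d1 H0) as (d2 & ? & ?).
    exists d2; split; auto. eapply rt_trans; eauto.
Qed.

Lemma beta_par : forall a b, beta a b -> par a b.
Proof.
  induction 1; try (constructor; auto using par_refl; fail).
  destruct H. apply p_beta; apply par_refl.
Qed.

Lemma betas_ctx : forall (f : term -> term), (forall a b, beta a b -> beta (f a) (f b)) ->
  forall a b, betas a b -> betas (f a) (f b).
Proof.
  intros f Hf a b H; induction H.
  - apply rt_step; auto.
  - apply rt_refl.
  - eapply rt_trans; eauto.
Qed.

Lemma par_betas : forall a b, par a b -> betas a b.
Proof.
  induction 1.
  - apply rt_refl.
  - apply (betas_ctx Lam); auto. intros; apply c_lam; auto.
  - eapply rt_trans.
    + apply (betas_ctx (fun x => App x b)); eauto. intros; apply c_appl; auto.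
    + apply (betas_ctx (fun x => App a' x)); eauto. intros; apply c_appr; auto.
  - eapply rt_trans.
    + apply (betas_ctx (fun x => Sub x b)); eauto. intros; apply c_subl; auto.
    + apply (betas_ctx (fun x => Sub a' x)); eauto. intros; apply c_subr; auto.
  - eapply rt_trans.
    + apply (betas_ctx (fun x => App (Lam x) b)); eauto. intros; apply c_appl, c_lam; auto.
    + eapply rt_trans.
      * apply (betas_ctx (fun x => App (Lam a') x)); eauto. intros; apply c_appr; auto.
      * apply rt_step, c_root, br.
Qed.

Lemma betas_pars : forall a b, betas a b -> pars a b.
Proof. induction 1; [apply rt_step, beta_par; auto|apply rt_refl|eapply rt_trans; eauto]. Qed.
Lemma pars_betas : forall a b, pars a b -> betas a b.
Proof. induction 1; [apply par_betas; auto|apply rt_refl|eapply rt_trans; eauto]. Qed.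

Lemma betas_confl : forall a b c, betas a b -> betas a c -> exists d, betas b d /\ betas c d.
Proof.
  intros. destruct (pars_confl a b c) as (d & ? & ?); try apply betas_pars; auto.
  exists d; split; apply pars_betas; auto.
Qed.

Lemma beta_ren : forall a b, beta a b -> forall xi, beta (ren xi a) (ren xi b).
Proof.
  unfold beta; induction 1; intros; simpl.
  - destruct H. simpl. rewrite E_ren. apply c_root, br.
  - apply c_lam; auto.
  - apply c_appl; auto.
  - apply c_appr; auto.
  - apply c_subl; auto.
  - apply c_subr; auto.
Qed.

Lemma beta_sb : forall a b, beta a b -> forall s, beta (sb s a) (sb s b).
Proof.
  unfold beta; induction 1; intros; simpl.
  - destruct H. simpl. rewrite E_sb. apply c_root, br.
  - apply c_lam; auto.
  - apply c_appl; auto.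
  - apply c_appr; auto.
  - apply c_subl; auto.
  - apply c_subr; auto.
Qed.

Lemma betas_sb : forall a b s, betas a b -> betas (sb s a) (sb s b).
Proof. intros; apply (betas_ctx (sb s)); auto; intros; apply beta_sb; auto. Qed.

Lemma betas_sub_pt : forall t s r, (forall n, betas (s n) (r n)) -> betas (sb s t) (sb r t).
Proof.
  induction t; intros s r H; simpl; auto.
  - apply (betas_ctx Lam); [intros; apply c_lam; auto|]. apply IHt.
    intros [|n]; simpl; [apply rt_refl|]. apply (betas_ctx (ren S)); auto.
    intros; apply beta_ren; auto.
  - eapply rt_trans.
    + apply (betas_ctx (fun x => App x (sb s t2))); [intros; apply c_appl; auto|]. apply IHt1; auto.
    + apply (betas_ctx (fun x => App (sb r t1) x)); [intros; apply c_appr; auto|]. apply IHt2; auto.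
  - apply rt_trans with (Sub (sb (ups r) t1) (sb s t2)).
    + apply (betas_ctx (fun x => Sub x (sb s t2))); [intros; apply c_subl; auto|]. apply IHt1.
      intros [|n]; simpl; [apply rt_refl|]. apply (betas_ctx (ren S)); auto.
      intros; apply beta_ren; auto.
    + apply (betas_ctx (fun x => Sub (sb (ups r) t1) x)); [intros; apply c_subr; auto|]. apply IHt2; auto.
Qed.

Fixpoint Sg (L : list term) : nat -> term :=
  match L with
  | nil => Var
  | v :: L' => fun n => sb (Sg L') (scons (unf v) Var n)
  end.

Lemma unf_appL : forall L a, unf (appL a L) = sb (Sg L) (unf a).
Proof.
  induction L; intros; simpl.
  - rewrite sb_var; reflexivity.
  - unfold appL in *. simpl. rewrite IHL. simpl. rewrite sb_sb. reflexivity.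
Qed.

Lemma Sg_high : forall L n, Sg L (n + length L) = Var n.
Proof.
  induction L; intros; simpl.
  - f_equal; lia.
  - replace (n + S (length L)) with (S (n + length L)) by lia. simpl. apply IHL.
Qed.

Lemma root_betas : forall a b, root_step a b -> betas (unf a) (unf b).
Proof.
  intros a b H; destruct H.
  - simpl. rewrite !unf_appL. simpl. apply rt_step.
    match goal with |- beta _ ?r => replace r with (sb (scons (unf u) Var) (sb (ups (Sg L)) (unf t))) end.
    + apply c_root, br.
    + rewrite !sb_sb, lift_ren, unf_ren. f_equal. extensionality n. destruct n; simpl.
      * rewrite sb_ren. unfold lf; simpl. rewrite <- (sb_var (unf u)) at 1. f_equal.
        extensionality x. rewrite Sg_high. reflexivity.
      * rewrite sb_ren. simpl. rewrite sb_var. reflexivity.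
  - simpl. rewrite subst0, unf_sb. replace (fun n => unf (scons u Var n)) with (scons (unf u) Var).
    apply rt_refl. extensionality n; destruct n; reflexivity.
  - simpl. rewrite subst0, unf_sb. replace (fun n => unf (scons u Var n)) with (scons (unf u) Var).
    apply rt_refl. extensionality n; destruct n; reflexivity.
  - apply ren_some_merge in H0. subst t. simpl.
    rewrite unf_ren, lift_ren, unf_ren, !sb_sb, sb_ren.
    match goal with |- betas ?l ?r => replace r with l end; [apply rt_refl|].
    f_equal. extensionality n. destruct n as [|[|n]]; simpl; try reflexivity.
    rewrite ?sb_ren. first [apply sb_id_ext | symmetry; apply sb_id_ext].
    intros x. unfold lf. simpl. rewrite Nat.add_1_r. reflexivity.
Qed.

Lemma lj_betas : forall a b, lj_step a b -> betas (unf a) (unf b).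
Proof.
  induction 1; simpl.
  - apply root_betas; auto.
  - apply (betas_ctx Lam); auto. intros; apply c_lam; auto.
  - apply (betas_ctx (fun x => App x (unf u))); auto. intros; apply c_appl; auto.
  - apply (betas_ctx (fun x => App (unf t) x)); auto. intros; apply c_appr; auto.
  - apply betas_sb; auto.
  - apply betas_sub_pt. intros [|n]; simpl; auto. apply rt_refl.
Qed.

Lemma ax_unf : forall E a b, eq_ax E a b -> unf a = unf b.
Proof.
  intros E a b H; destruct H; simpl; rewrite ?swap_ren, ?lift_ren, ?unf_ren.
  - rewrite !sb_sb, sb_ren. f_equal. extensionality n. destruct n as [|[|n]]; simpl.
    + rewrite sb_ren. apply sb_id_ext. intros x; unfold lf; simpl; rewrite ?Nat.add_1_r; reflexivity.
    + rewrite sb_ren. simpl. symmetry. apply sb_id_ext. intros x; unfold lf; simpl; rewrite ?Nat.add_1_r; reflexivity.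
    + reflexivity.
  - f_equal. rewrite sb_ren. f_equal. extensionality n. destruct n as [|[|n]]; simpl; try reflexivity. f_equal. extensionality x. unfold lf; simpl; lia.
  - f_equal. rewrite sb_ren. simpl. symmetry. apply sb_id_ext. intros x; unfold lf; simpl; rewrite ?Nat.add_1_r; reflexivity.
Qed.

Lemma ctx_ax_unf : forall E a b, ctx (eq_ax E) a b -> unf a = unf b.
Proof.
  induction 1; simpl; try congruence. eapply ax_unf; eauto.
Qed.

Lemma equiv_unf : forall E a b, equivE E a b -> unf a = unf b.
Proof.
  induction 1; try congruence. eapply ctx_ax_unf; eauto.
Qed.

Lemma stepsE_betas : forall E a b, stepsE E a b -> betas (unf a) (unf b).
Proof.
  induction 1.
  - destruct H as (t' & u' & H1 & H2 & H3).
    rewrite (equiv_unf _ _ _ H1), <- (equiv_unf _ _ _ H3). apply lj_betas; auto.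
  - apply rt_refl.
  - eapply rt_trans; eauto.
Qed.

Lemma ljs_stepsE : forall E a b, ljs a b -> stepsE E a b.
Proof.
  induction 1.
  - apply rt_step. exists x, y. repeat split; auto; apply rst_refl.
  - apply rt_refl.
  - eapply rt_trans; eauto.
Qed.

Theorem theorem25 (E : eqkind) (t0 t1 u0 u1 : term) :
  equivE E t0 t1 -> stepsE E t0 u0 -> stepsE E t1 u1 ->
  exists v0 v1, stepsE E u0 v0 /\ stepsE E u1 v1 /\ equivE E v0 v1.
Proof.
  intros He H0 H1.
  apply stepsE_betas in H0. apply stepsE_betas in H1.
  rewrite <- (equiv_unf _ _ _ He) in H1.
  destruct (betas_confl _ _ _ H0 H1) as (w & Hw0 & Hw1).
  exists w, w. split; [|split].
  - apply ljs_stepsE. eapply rt_trans; [apply ljs_unf|apply betas_ljs; auto].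
  - apply ljs_stepsE. eapply rt_trans; [apply ljs_unf|apply betas_ljs; auto].
  - apply rst_refl.
Qed.
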